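(* Let $(\Delta_0,\mathfrak o_0,m_0,q_0)$ be a quantized Brauer graph. Then there is a tower of quantized Brauer covering graphs $(\Delta_0,\mathfrak o_0,m_0,q_0),(\Delta_1,\mathfrak o_1,m_1,q_1),(\Delta_2,\mathfrak o_2,m_2,q_2),(\Delta_3,\mathfrak o_3,m_3,q_3)$ such that: (1) the multiplicity function $m_3$ is identically $1$; (2) the graph $\Delta_3$ has no loops; (3) the graph $\Delta_3$ has no multiple edges.
   Context: Brauer graphs. A Brauer graph $(\Delta,\mathfrak o,m)$ is a finite connected graph $\Delta$ (loops and multiple edges allowed) with vertex set (here written) $V(\Delta)$, edge set $E(\Delta)$ and at least one edge, together with a multiplicity function $m:V(\Delta)\to\mathbb Z_{\ge 1}$ and, for each vertex $\mu$, a cyclic ordering $\mathfrak o$ of the edges incident with $\mu$. A loop at $\mu$ occurs twice in the cyclic ordering at $\mu$; its two occurrences are regarded as two distinct edges (each with its own successor). Edge $j$ is the successor of edge $i$ at $\mu$ if $j$ immediately follows $i$ in the cyclic ordering at $\mu$. The valency $\operatorname{val}(\mu)$ is the number of edges incident with $\mu$, loops counted twice; if $\operatorname{val}(\mu)=1$ the unique edge at $\mu$ is its own successor. An edge $i$ is truncated at its endpoint $\mu$ if $\operatorname{val}(\mu)=1$ and $m(\mu)=1$. Fix a field $K$. A quantized Brauer graph $(\Delta,\mathfrak o,m,q)$ is a Brauer graph with a function $q:\mathcal X_\Delta\to K\setminus\{0\}$, $(i,\mu)\mapsto q_{i,\mu}$, where $\mathcal X_\Delta$ is the set of pairs $(i,\mu)$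 with $\mu$ an endpoint of $i$ and $i$ not truncated at either of its endpoints. Successor weightings. Let $G$ be a finite abelian group. For a vertex $\mu$ let $\mathcal Z_\mu$ be the set of pairs $(i,j)$ of edges with $j$ the successor of $i$ at $\mu$, and $\mathcal Z_\Delta=\bigsqcup_{\mu}\mathcal Z_\mu$ (disjoint union). A successor weighting is a function $W:\mathcal Z_\Delta\to G$. Put $\omega_\mu=\prod_{(i,j)\in\mathcal Z_\mu}W(i,j)$, let $\operatorname{ord}(\mu)$ be the order of $\omega_\mu$ in $G$, and $H_\mu=\langle\omega_\mu\rangle$. $W$ is a Brauer weighting if $\operatorname{ord}(\mu)$ divides $m(\mu)$ for all vertices $\mu$. For each $\mu$, $\sim$ is the equivalence relation on the set of pairs $(i,H_\mu g)$ ($i$ incident with $\mu$, $g\in G$) generated by $(i,H_\mu g)\sim(j,H_\mu gW(i,j))$ whenever $j$ is the successor of $i$ at $\mu$; the class of $(i,H_\mu g)$ is $[i,H_\mu g]$, and $\mathcal D_\mu$ is the set of classes. Brauer covering graph. The graph $\Delta_W$ has vertices $\mu_d$ ($\mu$ a vertex of $\Delta$, $d\in\mathcal D_\mu$) and edges $i_g$ ($i$ an edge of $\Delta$, $g\in G$). If $i$ has endpoints $\mu$ and $\nu$, then $i_g$ has endpoints $\mu_{[i,H_\mu g]}$ and $\nu_{[i,H_\nu g]}$; if $i$ is a loop at $\mu$ with its two occurrences $i,\hat i$, then $i_g$ has endpoints $\mu_{[i,H_\mu g]}$ and $\mu_{[\hat i,H_\mu g]}$. The cyclic ordering $\mathfrak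 o_W$ is defined by: if $j$ is the successor of $i$ at $\mu$, then $j_{gW(i,j)}$ is the successor of $i_g$ at $\mu_{[i,H_\mu g]}$. For a Brauer weighting, $m_W(\mu_d)=m(\mu)/\operatorname{ord}(\mu)$. Given a quantizing function $q$ on $\Delta$, $q_W(i_g,\mu_d)=q_{i,\mu}$, and $(\Delta_W,\mathfrak o_W,m_W,q_W)$ is the quantized Brauer covering graph. Towers. A sequence $(\Delta_0,\mathfrak o_0,m_0,q_0),\dots,(\Delta_n,\mathfrak o_n,m_n,q_n)$ of quantized Brauer graphs is a tower of quantized Brauer covering graphs if for each $1\le k\le n$ there are a finite abelian group $G_k$ and a Brauer weighting $W_k:\mathcal Z_{\Delta_{k-1}}\to G_k$ of $(\Delta_{k-1},\mathfrak o_{k-1},m_{k-1},q_{k-1})$ such that $(\Delta_k,\mathfrak o_k,m_k,q_k)$ is the quantized Brauer covering graph associated to $W_k$. *)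

(* Defs.v *)
From HB Require Import structures.
From mathcomp Require Import all_boot all_order all_algebra all_fingroup.
Set Implicit Arguments. Unset Strict Implicit. Unset Printing Implicit Defensive.

(* Edges [qE], vertices [qV]; every edge [e] has two ends (half-edges)
   [(e, true)] and [(e, false)], with endpoints [qend e true], [qend e false].
   A loop is an edge whose two ends have the same endpoint; its two ends are
   the two occurrences of the loop in the cyclic ordering.
   The cyclic ordering at each vertex is encoded by the successor map [qsucc]
   on half-edges: it is a permutation preserving the endpoint whose
   restriction to the half-edges at each vertex is a single cycle
   (succ h = h when the valency is 1).
   The quantizing function is a total function [qq : qE -> qV -> K], only
   its values on X_Delta are meaningful (required nonzero there). *)

Section Basic.
Variables (E V : finType) (endp : E -> bool -> V) (mult : V -> nat).

Definition half_end (h : E * bool) : V := endp h.1 h.2.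

Definition valency (mu : V) : nat := #|[pred h : E * bool | half_end h == mu]|.

Definition truncated_at (mu : V) : bool := (valency mu == 1) && (mult mu == 1).

Definition inX (i : E) (mu : V) : bool :=
  [&& (endp i true == mu) || (endp i false == mu),
      ~~ truncated_at (endp i true) & ~~ truncated_at (endp i false)].

Definition adjv : rel V := fun u v =>
  [exists e, ((endp e true == u) && (endp e false == v))
          || ((endp e false == u) && (endp e true == v))].
End Basic.

Record QBrauerGraph (K : fieldType) := QBG {
  qE : finType;
  qV : finType;
  qend : qE -> bool -> qV;
  qsucc : qE * bool -> qE * bool;
  qmult : qV -> nat;
  qq : qE -> qV -> K;
  qE_nonempty : 0 < #|qE|;
  qconnected : forall u v : qV, connect (adjv qend) u v;
  qsucc_inj : injective qsucc;
  qsucc_end : forall h, half_end qend (qsucc h) = half_end qend h;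
  qsucc_cycle : forall h h', half_end qend h = half_end qend h' ->
                             fconnect qsucc h h';
  qmult_pos : forall v, 0 < qmult v;
  qq_nz : forall i mu, inX qend qmult i mu -> qq i mu != (0 : K)%R
}.

Arguments qend {K} q _ _.
Arguments qsucc {K} q _.
Arguments qmult {K} q _.
Arguments qq {K} q _ _.

Section Covering.
Variables (K : fieldType) (B : QBrauerGraph K) (gT : finGroupType).
(* A successor weighting: the pair (h, succ h) of Z_Delta is indexed by h. *)
Variable W : qE B * bool -> gT.

Definition hend (h : qE B * bool) : qV B := half_end (qend B) h.

Definition omega (mu : qV B) : gT := (\prod_(h | hend h == mu) W h)%g.

Definition brauer_weighting : Prop :=
  forall mu : qV B, (#[omega mu]%g %| qmult B mu)%N.

(* generating relation of ~ on pairs (half-edge, coset) *)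
Definition simgen : rel ((qE B * bool) * {set gT}) := fun x y =>
  (y.1 == qsucc B x.1) && (y.2 == (x.2 :* W x.1)%g).

Definition simcls (mu : qV B) (h1 : qE B * bool) (g1 : gT)
                  (h2 : qE B * bool) (g2 : gT) : bool :=
  connect (fun x y => simgen x y || simgen y x)
          (h1, (<[omega mu]> :* g1)%g) (h2, (<[omega mu]> :* g2)%g).

(* B' is (isomorphic to) the quantized Brauer covering graph associated to W:
   phi identifies the edges of B' with the i_g = (i, g). *)
Definition is_covering (B' : QBrauerGraph K) : Prop :=
  exists phi : qE B' -> qE B * gT,
  [/\ bijective phi,
      (forall e' b,
         (phi (qsucc B' (e', b)).1
            = ((qsucc B ((phi e').1, b)).1, ((phi e').2 * W ((phi e').1, b))%g))
         /\ (qsucc B' (e', b)).2 = (qsucc B ((phi e').1, b)).2),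
      (* vertices: the end of i_g on side b is mu_[ (i,b), H_mu g ] *)
      (forall e1 b1 e2 b2,
         qend B' e1 b1 = qend B' e2 b2 <->
         (qend B (phi e1).1 b1 = qend B (phi e2).1 b2 /\
          simcls (qend B (phi e1).1 b1) ((phi e1).1, b1) (phi e1).2
                                        ((phi e2).1, b2) (phi e2).2)),
      (forall e' b,
         qmult B' (qend B' e' b)
           = (qmult B (qend B (phi e').1 b) %/ #[omega (qend B (phi e').1 b)]%g)%N)
    &
      (forall e' b, inX (qend B') (qmult B') e' (qend B' e' b) ->
         qq B' e' (qend B' e' b) = qq B (phi e').1 (qend B (phi e').1 b))].
End Covering.

Definition covering_step (K : fieldType) (B B' : QBrauerGraph K) : Prop :=
  exists (gT : finGroupType) (W : qE B * bool -> gT),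
    [/\ abelian [set: gT], brauer_weighting W & is_covering W B'].

Definition no_loops (K : fieldType) (B : QBrauerGraph K) : Prop :=
  forall e : qE B, qend B e true != qend B e false.

Definition no_multiple_edges (K : fieldType) (B : QBrauerGraph K) : Prop :=
  forall e1 e2 : qE B, e1 != e2 ->
    ~~ (((qend B e1 true == qend B e2 true) && (qend B e1 false == qend B e2 false))
     || ((qend B e1 true == qend B e2 false) && (qend B e1 false == qend B e2 true))).

(* Main.v *)
Require Import Defs.
From HB Require Import structures.
From mathcomp Require Import all_boot all_order all_algebra all_fingroup.
From mathcomp Require Import all_solvable.
Set Implicit Arguments. Unset Strict Implicit. Unset Printing Implicit Defensive.
Import GRing.Theory.
Local Open Scope ring_scope.

Lemma connect_homo (T1 T2 : finType) (e1 : rel T1) (e2 : rel T2) (f : T1 -> T2) :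
  (forall x y, e1 x y -> connect e2 (f x) (f y)) ->
  forall x y, connect e1 x y -> connect e2 (f x) (f y).
Proof.
move=> H x _ /connectP[p e_p ->]; elim: p x e_p => [|y p IHp] x /=; first by rewrite connect0.
by case/andP=> /H h1 /IHp; apply: connect_trans.
Qed.

Section Cover.
Variables (K : fieldType) (B : QBrauerGraph K) (V : finZmodType).
Variable W : qE B * bool -> V.

Definition HE := (qE B * bool)%type.
Definition TT := (HE * V)%type.

Definition om (mu : qV B) : V := omega (W : _ -> (V : finGroupType)) mu.
Lemma omE mu : om mu = \sum_(h | hend h == mu) W h.
Proof. by []. Qed.

Definition succT (x : TT) : TT := (qsucc B x.1, x.2 + W x.1).
Definition R0 (x y : TT) : bool := (y == succT x) || (y == (x.1, om (hend x.1) + x.2)).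
Definition RR : rel TT := fun x y => R0 x y || R0 y x.
Definition flipT (x : TT) : TT := ((x.1.1, ~~ x.1.2), x.2).
Definition SS : rel TT := fun x y => RR x y || (y == flipT x).

Lemma RR_sym : symmetric RR. Proof. by move=> x y; rewrite /RR orbC. Qed.
Lemma csR : connect_sym RR. Proof. exact: sym_connect_sym RR_sym. Qed.
Lemma SS_sym : symmetric SS.
Proof.
move=> x y; rewrite /SS RR_sym; congr (_ || _).
case: x y => [[e b] g] [[e' b'] g']; rewrite /flipT /=.
by apply/eqP/eqP => -[-> -> ->]; rewrite ?negbK.
Qed.


Lemma hend_succ h : hend (qsucc B h) = hend h.
Proof. exact: qsucc_end. Qed.

Lemma RR_hend x y : RR x y -> hend y.1 = hend x.1.
Proof.
by rewrite /RR /R0 => /orP[/orP[]|/orP[]] /eqP -> //=; rewrite hend_succ.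
Qed.

Lemma connectR_hend x y : connect RR x y -> hend y.1 = hend x.1.
Proof.
move=> c; have cl : closed RR [pred z : TT | hend z.1 == hend x.1].
  by apply: intro_closed; [exact: csR | move=> a b /RR_hend; rewrite !inE => ->].
by have := closed_connect cl c; rewrite !inE eqxx => /esym/eqP.
Qed.

Lemma iter_succT n h g :
  iter n succT (h, g) = (iter n (qsucc B) h, g + \sum_(k < n) W (iter k (qsucc B) h)).
Proof.
elim: n => [|n IH]; first by rewrite big_ord0 addr0.
by rewrite iterS IH /succT /= big_ord_recr /= addrA.
Qed.

Lemma sum_traject n h :
  \sum_(k < n) W (iter k (qsucc B) h) = \sum_(y <- traject (qsucc B) h n) W y.
Proof.
elim: n => [|n IH]; first by rewrite big_ord0 big_nil.
by rewrite big_ord_recr trajectSr big_rcons /= IH addrC.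
Qed.

Lemma fconnect_hend h h' : fconnect (qsucc B) h h' = (hend h' == hend h).
Proof.
apply/idP/idP => [c|/eqP e].
  by rewrite (@fconnect_invariant _ _ _ (@hend K B) _ h h' c) // => z; rewrite /= hend_succ eqxx.
by apply: qsucc_cycle.
Qed.

Lemma fullturn h g : iter (fingraph.order (qsucc B) h) succT (h, g) = (h, om (hend h) + g).
Proof.
rewrite iter_succT iter_order; last exact: qsucc_inj.
rewrite sum_traject addrC omE; congr (_, _ + _).
rewrite -[RHS]big_filter; apply: perm_big; apply: uniq_perm; first exact: orbit_uniq.
  by rewrite filter_uniq // index_enum_uniq.
by move=> y; rewrite -fconnect_orbit fconnect_hend mem_filter mem_index_enum andbT.
Qed.

Lemma succT_inj : injective succT.
Proof.
case=> h g [h' g'] [/qsucc_inj e]; move: e => -> /addIr ->. done.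
Qed.

Lemma RR_fconnect x y : RR x y -> fconnect succT x y.
Proof.
have H0 a b : R0 a b -> fconnect succT a b.
  case/orP => /eqP ->; first exact: fconnect1.
  by case: a => h g; rewrite -fullturn; apply: fconnect_iter.
case/orP; first exact: H0.
by move/H0; rewrite fconnect_sym //; exact: succT_inj.
Qed.

Lemma connectR_fconnect x y : connect RR x y -> fconnect succT x y.
Proof. by apply: connect_sub => a b /RR_fconnect. Qed.

Definition VT := {x : TT | fingraph.root RR x == x}.
Definition vx (x : TT) : VT := exist _ (fingraph.root RR x) (introT eqP (root_root csR x)).

Lemma vx_eq x y : vx x = vx y <-> connect RR x y.
Proof.
split => [e|c]; last by apply: val_inj => /=; apply/(fingraph.rootP csR).
by apply/(fingraph.rootP csR); move: e => /(congr1 val).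
Qed.

Lemma vx_val (v : VT) : vx (val v) = v.
Proof. by apply: val_inj => /=; case: v => x /= /eqP. Qed.

Definition baseV (v : VT) : qV B := hend (val v).1.
Lemma baseV_vx x : baseV (vx x) = hend x.1.
Proof. by rewrite /baseV /= (connectR_hend (connect_root _ x)). Qed.

Local Notation E' := (qE B * V)%type.
Definition tof (h : E' * bool) : TT := ((h.1.1, h.2), h.1.2).
Definition untof (x : TT) : E' * bool := ((x.1.1, x.2), x.1.2).
Lemma tofK : cancel tof untof. Proof. by case=> [[e g] b]. Qed.
Lemma untofK : cancel untof tof. Proof. by case=> [[e b] g]. Qed.

Definition qend' (e : E') (b : bool) : VT := vx ((e.1, b), e.2).
Definition qsucc' (h : E' * bool) : E' * bool := untof (succT (tof h)).
Definition qmult' (v : VT) : nat := (qmult B (baseV v) %/ #[om (baseV v)]%g)%N.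
Definition qq' (e : E') (v : VT) : K := qq B e.1 (baseV v).

Lemma half_end' h : half_end qend' h = vx (tof h).
Proof. by []. Qed.

Lemma qsucc'_inj : injective qsucc'.
Proof. by move=> a b /(can_inj untofK) /succT_inj /(can_inj tofK). Qed.

Lemma qsucc'_end h : half_end qend' (qsucc' h) = half_end qend' h.
Proof.
rewrite !half_end' /qsucc' untofK; apply/vx_eq; rewrite csR; apply: connect1.
by rewrite /RR /R0 eqxx.
Qed.

Lemma iter_qsucc' n h : iter n qsucc' h = untof (iter n succT (tof h)).
Proof.
elim: n => [|n IH] /=; first by rewrite tofK.
by rewrite IH /qsucc' untofK.
Qed.

Lemma qsucc'_cycle h h' : half_end qend' h = half_end qend' h' -> fconnect qsucc' h h'.
Proof.
rewrite !half_end' => /vx_eq /connectR_fconnect c.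
have <- : iter (findex succT (tof h) (tof h')) qsucc' h = h'.
  by rewrite iter_qsucc' (iter_findex c) tofK.
exact: fconnect_iter.
Qed.

Lemma qmult'_pos (hbr : brauer_weighting W) v : (0 < qmult' v)%N.
Proof.
rewrite /qmult' divn_gt0 ?order_gt0 //; apply: dvdn_leq; first exact: qmult_pos.
exact: hbr.
Qed.

Local Notation Sg := (fun a b => simgen (W : _ -> (V : finGroupType)) a b || simgen (W : _ -> (V : finGroupType)) b a).
Definition Cs (mu : qV B) (g : V) : {set V} := (<[om mu : V]> :* (g : V))%g.

Lemma Cs_om mu g : Cs mu (om mu + g) = Cs mu g.
Proof.
rewrite /Cs; change (om mu + g) with (om mu * g)%g.
by rewrite rcosetM rcoset_id // cycle_id.
Qed.

Lemma Cs_add mu g w : Cs mu (g + w) = (Cs mu g :* w)%g.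
Proof. by rewrite /Cs; change (g + w) with (g * w)%g; rewrite rcosetM. Qed.

Lemma RR_Sg mu z w : hend z.1 = mu -> RR z w -> connect Sg (z.1, Cs mu z.2) (w.1, Cs mu w.2).
Proof.
case: z w => [h g] [h' g'] /= hz; rewrite /RR /R0 /succT /= !xpair_eqE.
case/orP => /orP[] /andP[/eqP e1 /eqP e2]; subst.
- by apply: connect1; rewrite /simgen /= eqxx Cs_add eqxx.
- by rewrite Cs_om connect0.
- by apply: connect1; rewrite /simgen /= eqxx Cs_add eqxx orbT.
- by rewrite Cs_om connect0.
Qed.

Lemma path_Sg mu p z : hend z.1 = mu -> path RR z p ->
  connect Sg (z.1, Cs mu z.2) ((last z p).1, Cs mu (last z p).2).
Proof.
elim: p z => [|w p IH] z /=; first by rewrite connect0.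
move=> hz /andP[rzw pw]; apply: connect_trans (RR_Sg hz rzw) _.
by apply: IH => //; rewrite (RR_hend rzw).
Qed.

Lemma connectR_Sg x y : connect RR x y ->
  connect Sg (x.1, Cs (hend x.1) x.2) (y.1, Cs (hend x.1) y.2).
Proof. by move=> /connectP[p pp ->]; apply: path_Sg. Qed.

Lemma Sg_R x mu (a b : HE * {set V}) :
  (exists g, a.2 = Cs mu g /\ connect RR x (a.1, g)) -> Sg a b ->
  (exists g, b.2 = Cs mu g /\ connect RR x (b.1, g)).
Proof.
case: a b => [a1 a2] [b1 b2] [g /= [-> cx]]; rewrite /simgen /=.
case/orP => /andP[/eqP e1 /eqP e2].
  exists (g + W a1); rewrite Cs_add e2; split => //.
  by apply: connect_trans cx (connect1 _); rewrite /RR /R0 /succT /= e1 eqxx.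
exists (g - W b1); split.
  have -> : b2 = (b2 :* W b1 :* (W b1)^-1)%g by rewrite rcosetK.
  by rewrite -e2 -Cs_add.
apply: connect_trans cx (connect1 _); rewrite /RR /R0 /succT /= e1 subrK eqxx.
by rewrite orbT.
Qed.

Lemma Sg_connectR x y : hend x.1 = hend y.1 ->
  connect Sg (x.1, Cs (hend x.1) x.2) (y.1, Cs (hend x.1) y.2) -> connect RR x y.
Proof.
move=> hxy /connectP[p pp elast]; set mu := hend x.1.
have : exists g, (last (x.1, Cs mu x.2) p).2 = Cs mu g /\ connect RR x ((last (x.1, Cs mu x.2) p).1, g).
  have : exists g, (x.1, Cs mu x.2).2 = Cs mu g /\ connect RR x ((x.1, Cs mu x.2).1, g).
    by exists x.2; split => //=; rewrite -surjective_pairing connect0.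
  elim: p (x.1, Cs mu x.2) pp {elast} => [|b p IH] a //= /andP[sab pb] ia.
  exact: IH pb (Sg_R ia sab).
rewrite -elast /= => -[g [eC cx]].
have : y.2 \in Cs mu g by rewrite -eC /Cs rcoset_refl.
case/rcosetP => a /cycleP[n ->] ye.
apply: connect_trans cx _; rewrite [y]surjective_pairing ye /mu hxy; clear ye.
elim: n => [|n IH]; first by rewrite expg0 mul1g connect0.
apply: connect_trans IH (connect1 _); rewrite /RR /R0 /= -hxy expgS -mulgA.
by rewrite eqxx !orbT.
Qed.

Lemma connectR_simcls x y : connect RR x y <->
  (hend x.1 = hend y.1 /\ simcls (W : _ -> (V : finGroupType)) (hend x.1) x.1 x.2 y.1 y.2).
Proof.
split => [c|[h s]]; last exact: Sg_connectR.
by split; [rewrite (connectR_hend c) | exact: connectR_Sg].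
Qed.

Hypothesis hbr : brauer_weighting W.

Lemma trunc_up e b :
  truncated_at (qend B) (qmult B) (qend B e.1 b) -> truncated_at qend' qmult' (qend' e b).
Proof.
set mu := qend B e.1 b; set h0 : HE := (e.1, b).
have hh0 : hend h0 = mu by [].
case/andP => /eqP hval /eqP hm.
have uniq1 : forall y : HE, hend y = mu -> y = h0.
  have /card1P [z hz] : #|[pred h | half_end (qend B) h == mu]| == 1%N by rewrite -/(valency _ _) hval.
  move=> y hy; have := hz y; have := hz h0; rewrite !inE /= -/(hend h0) -/(hend y) hy hh0 eqxx.
  by move=> /esym/eqP -> /esym/eqP.
have om0 : om mu = 0.
  by have := hbr mu; rewrite hm dvdn1 order_eq1 => /eqP.
have W0 : W h0 = 0.
  rewrite -om0 omE (big_pred1 h0) // => y /=; apply/eqP/eqP => [/eqP|->//].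
  by move/eqP/uniq1.
have s0 : qsucc B h0 = h0 by apply: uniq1; rewrite hend_succ.
set x0 : TT := (h0, e.2).
have single : forall z, connect RR x0 z -> z = x0.
  move=> z c; have cl : closed RR (pred1 x0).
    apply: intro_closed; first exact: csR.
    move=> a c' + /eqP ea; subst a; rewrite /RR /R0 inE.
    case: c' => [h g]; rewrite /succT /x0 /= hh0 om0 s0 W0 !addr0 add0r !xpair_eqE.
    case/orP => [/orP[]|/orP[]]; try exact: id.
      case/andP=> /eqP e1 /eqP e2; have hh : hend h = mu by rewrite -hend_succ -e1.
      by move: e2; rewrite (uniq1 h hh) W0 addr0 => ->; rewrite !eqxx.
    case/andP=> /eqP e1 /eqP e2; subst h.
    by move: e2; rewrite hh0 om0 add0r => ->; rewrite !eqxx.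
  by have := closed_connect cl c; rewrite !inE eqxx => /esym/eqP.
apply/andP; split; last first.
  by rewrite /qmult' /qend' baseV_vx /= -/mu om0 hm order1.
rewrite /valency; apply/card1P; exists (e, b) => h'; rewrite inE /= half_end'.
apply/eqP/eqP => [/vx_eq|->]; last by rewrite /tof /qend'.
rewrite csR => /single; rewrite /x0 /h0 /tof.
by case: h' => [[e1 g1] b1] /= [-> -> ->]; case: (e).
Qed.

Lemma qq'_nz e v : inX qend' qmult' e v -> qq' e v != 0.
Proof.
case/and3P => hv t1 t2; apply: qq_nz; rewrite /inX.
have bv : (qend B e.1 true == baseV v) || (qend B e.1 false == baseV v).
  by case/orP: hv => /eqP <-; rewrite /qend' baseV_vx eqxx ?orbT.
rewrite bv /=; apply/andP; split; apply/negP.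
  by move=> /trunc_up; rewrite (negPf t1).
by move=> /trunc_up; rewrite (negPf t2).
Qed.

Lemma SS_vx a b : SS a b -> connect (adjv qend') (vx a) (vx b).
Proof.
case/orP => [r|/eqP ->]; first by rewrite (proj2 (vx_eq a b) (connect1 r)) connect0.
apply: connect1; apply/existsP; exists (a.1.1, a.2).
case: a => [[e bb] g] /=; rewrite /qend' /=.
by case: bb; rewrite !eqxx ?orbT.
Qed.

Hypothesis hconn : forall x y : TT, connect SS x y.

Lemma qconnected' (u v : VT) : connect (adjv qend') u v.
Proof.
rewrite -(vx_val u) -(vx_val v); apply: (connect_homo SS_vx); exact: hconn.
Qed.

Lemma qE'_nonempty : (0 < #|{: qE B * V}|)%N.
Proof.
rewrite card_prod muln_gt0 qE_nonempty /=.
by apply/card_gt0P; exists 0.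
Qed.

Definition coverQ : QBrauerGraph K :=
  @QBG K _ _ qend' qsucc' qmult' qq' qE'_nonempty qconnected'
    qsucc'_inj qsucc'_end qsucc'_cycle (qmult'_pos hbr) qq'_nz.

Lemma coverQ_is_covering : is_covering (W : _ -> (V : finGroupType)) coverQ.
Proof.
exists id; split.
- by exists id.
- by move=> e' b.
- move=> e1 b1 e2 b2; rewrite /= /qend'; split.
    by move=> /vx_eq /connectR_simcls.
  by move=> h; apply/vx_eq/connectR_simcls.
- by move=> e' b; rewrite /= /qmult' /qend' baseV_vx.
- by move=> e' b _; rewrite /= /qq' /qend' baseV_vx.
Qed.

Lemma coverQ_step : covering_step B coverQ.
Proof.
exists (V : finGroupType), W; split => //; last exact: coverQ_is_covering.
exact: FinRing.zmod_abelian.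
Qed.

End Cover.

Section Conn.
Variables (K : fieldType) (B : QBrauerGraph K) (V : finZmodType).
Variable W : qE B * bool -> V.

Local Notation SS := (SS W).
Local Notation RR := (RR W).

Definition trT (a : V) (x : TT B V) : TT B V := (x.1, a + x.2).

Lemma SS_tr a x y : SS x y -> SS (trT a x) (trT a y).
Proof.
case: x y => [h g] [h' g']; rewrite /trT /SS /RR /R0 /succT /flipT /= !xpair_eqE.
rewrite !(inj_eq (addrI a)) -!addrA !(inj_eq (addrI a)) ![_ + (a + _)]addrCA !(inj_eq (addrI a)).
done.
Qed.

Lemma connect_tr a x y : connect SS x y -> connect SS (trT a x) (trT a y).
Proof. by apply: connect_homo => u v /(SS_tr a) /connect1. Qed.

Lemma csS : connect_sym SS.
Proof. exact: sym_connect_sym (@SS_sym _ _ _ W). Qed.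

Lemma connectR_S x y : connect RR x y -> connect SS x y.
Proof. by apply: connect_sub => u v r; apply: connect1; rewrite /SS r. Qed.

Lemma same_vertex_lift h1 h2 : hend h1 = hend h2 ->
  exists c, forall g, connect SS (h1, g) (h2, g + c).
Proof.
move=> e; have : fconnect (qsucc B) h1 h2 by rewrite fconnect_hend e.
move=> /iter_findex; set n := findex _ _ _ => hn.
exists (\sum_(k < n) W (iter k (qsucc B) h1)) => g.
rewrite -hn -(iter_succT W); apply: connectR_S.
apply: connect_sub (fconnect_iter _ _ _) => u v /eqP <-; apply: connect1.
by rewrite /RR /R0 eqxx.
Qed.

Lemma base_conn h h' : exists c, forall g, connect SS (h, g) (h', g + c).
Proof.
suff : forall v, connect (adjv (qend B)) (hend h) v ->
    forall h', hend h' = v -> exists c, forall g, connect SS (h, g) (h', g + c).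
  by move=> H; apply: (H (hend h')) => //; apply: qconnected.
move=> v /connectP[p pp ->] {v}; elim/last_ind: p pp => [|p w IH] /=.
  by move=> _ h2 /esym; apply: same_vertex_lift.
rewrite rcons_path last_rcons => /andP[pp /existsP[e he]] h2 hh2.
have [b [eb1 eb2]] : exists b, qend B e b = last (hend h) p /\ qend B e (~~ b) = w.
  by case/orP: he => /andP[/eqP e1 /eqP e2]; [exists true | exists false].
have [c1 hc1] := IH pp (e, b) eb1.
have [c2 hc2] : exists c, forall g, connect SS ((e, ~~ b), g) (h2, g + c).
  by apply: same_vertex_lift; rewrite hh2 -eb2.
exists (c1 + c2) => g; apply: connect_trans (hc1 g) _.
rewrite addrA; apply: connect_trans (hc2 _).
by apply: connect1; rewrite /SS /flipT eqxx orbT.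
Qed.

Lemma conn_crit h0 : (forall c, connect SS (h0, 0) (h0, c)) -> forall x y, connect SS x y.
Proof.
move=> H [h g] [h' g'].
have [c1 hc1] := base_conn h h0; have [c2 hc2] := base_conn h0 h'.
apply: connect_trans (hc1 g) _.
have e : connect SS (h0, g' - c2) (h', g') by have := hc2 (g' - c2); rewrite subrK.
apply: connect_trans e.
have := connect_tr (g + c1) (H ((g' - c2) - (g + c1))).
rewrite /trT /= addr0.
have -> : g + c1 + (g' - c2 - (g + c1)) = g' - c2 by rewrite addrC subrK.
by [].
Qed.

Lemma om_in_D mu h0 (hm : qE B * bool) : hend hm = mu ->
  forall g, connect SS (h0, g) (h0, om W mu + g).
Proof.
move=> hmu g; have [c hc] := base_conn h0 hm.
apply: connect_trans (hc g) _.
apply: connect_trans (_ : connect SS (hm, om W mu + (g + c)) _).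
  by apply: connect1; rewrite /SS /RR /R0 /= hmu eqxx !orbT.
by rewrite csS addrA; apply: hc.
Qed.

End Conn.

Section Pot.
Variables (K : fieldType) (B : QBrauerGraph K) (V : finZmodType).
Variable p : qE B * bool -> V.

Definition Wp (h : qE B * bool) : V := p (qsucc B h) - p h.

Lemma om_pot mu : om Wp mu = 0.
Proof.
rewrite omE sumrB [X in _ - X](reindex_inj (@qsucc_inj _ B)) /=.
have E : \sum_(j | hend (qsucc B j) == mu) p (qsucc B j) = \sum_(j | hend j == mu) p (qsucc B j).
  by apply: eq_bigl => j; rewrite hend_succ.
by rewrite E subrr.
Qed.

Lemma brauer_pot : brauer_weighting (Wp : _ -> (V : finGroupType)).
Proof.
move=> mu; have -> : omega (Wp : _ -> (V : finGroupType)) mu = 1%g by apply: om_pot.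
by rewrite order1 dvd1n.
Qed.

Lemma tele n h : \sum_(k < n) Wp (iter k (qsucc B) h) = p (iter n (qsucc B) h) - p h.
Proof.
elim: n => [|n IH]; first by rewrite big_ord0 subrr.
by rewrite big_ord_recr /= IH /Wp addrC addrA subrK.
Qed.

Lemma RR_pot a b : RR Wp a b -> hend b.1 = hend a.1 /\ b.2 - p b.1 = a.2 - p a.1.
Proof.
have H0 u v : R0 Wp u v -> hend v.1 = hend u.1 /\ v.2 - p v.1 = u.2 - p u.1.
  case: u v => [h g] [h' g']; rewrite /R0 /succT /= !xpair_eqE om_pot add0r.
  case/orP => /andP[/eqP -> /eqP ->]; split => //; first exact: hend_succ.
  by rewrite /Wp addrA addrAC addrK.
by case/orP => /H0 // [-> ->].
Qed.

Lemma connectR_pot x y : connect (RR Wp) x y <->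
  hend x.1 = hend y.1 /\ x.2 - p x.1 = y.2 - p y.1.
Proof.
split => [c|[e1 e2]].
  have cl : closed (RR Wp) [pred z : TT B V | (hend z.1 == hend x.1) && (z.2 - p z.1 == x.2 - p x.1)].
    apply: intro_closed; first exact: csR.
    by move=> a b /RR_pot [e1 e2]; rewrite !inE e1 e2.
  by have := closed_connect cl c; rewrite !inE !eqxx => /esym/andP[/eqP -> /eqP ->].
have : fconnect (qsucc B) x.1 y.1 by rewrite fconnect_hend e1.
move=> /iter_findex; set n := findex _ _ _ => hn.
have -> : y = iter n (succT Wp) x.
  rewrite [x]surjective_pairing iter_succT tele hn [y]surjective_pairing; congr (_, _).
  by rewrite /= addrCA e2 addrC subrK.
apply: connect_sub (fconnect_iter _ _ _) => u v /eqP <-; apply: connect1.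
by rewrite /RR /R0 eqxx.
Qed.

Variable hconn : forall x y : TT B V, connect (SS Wp) x y.

Definition potQ := coverQ brauer_pot hconn.

Lemma potQ_end e1 b1 e2 b2 : qend potQ e1 b1 = qend potQ e2 b2 <->
  qend B e1.1 b1 = qend B e2.1 b2 /\ e1.2 - p (e1.1, b1) = e2.2 - p (e2.1, b2).
Proof.
rewrite /potQ /= /qend'; split; first by move=> /vx_eq /connectR_pot.
by move=> h; apply/vx_eq/connectR_pot.
Qed.

Lemma potQ_mult v : qmult potQ v = qmult B (baseV v).
Proof.
rewrite /potQ /= /qmult'.
have -> : om Wp (baseV v) = 1%g by apply: om_pot.
by rewrite order1 divn1.
Qed.

Lemma potQ_step : covering_step B potQ.
Proof. exact: coverQ_step. Qed.

End Pot.

Section Final.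
Variables (K : fieldType) (B : QBrauerGraph K) (e0 e1 : qE B) (sg : qE B -> bool).
Hypothesis sg0 : sg e0.

Definition MM := (#|qE B|.+3)%N.
Local Notation N := ((2 * MM).+1)%N.
Local Notation ZN := 'I_N.

Definition vv (e : qE B) : nat :=
  if e == e0 then 1%N else if e == e1 then 2%N else (enum_rank e).+3.

Lemma vv_bound e : (0 < vv e < MM)%N.
Proof.
rewrite /vv /MM; case: ifP => // _; case: ifP => // _.
by rewrite /= ltnS ltnS ltnS ltn_ord.
Qed.

Lemma vv_inj : injective vv.
Proof.
move=> a b; rewrite /vv.
case: (eqVneq a e0) => [->|na0]; case: (eqVneq b e0) => [->|nb0] //.
- by case: ifP.
- by case: ifP.
case: (eqVneq a e1) => [->|na1]; case: (eqVneq b e1) => [->|nb1] //.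
by move=> [] /ord_inj /enum_rank_inj.
Qed.

Definition cc (e : qE B) : ZN := if sg e then inZp (vv e) else - inZp (vv e).

Lemma inZp_inj a b : (a < N)%N -> (b < N)%N -> (inZp a : ZN) = inZp b -> a = b.
Proof. by move=> ha hb /(congr1 val) /=; rewrite !modn_small. Qed.

Lemma inZp_add a b : (inZp a : ZN) + inZp b = inZp (a + b).
Proof. by apply: val_inj; rewrite /= modnDm. Qed.

Lemma inZp_sum_nz a b : (0 < a + b < N)%N -> (inZp a : ZN) + inZp b != 0.
Proof.
move=> /andP[h1 h2]; rewrite inZp_add; apply/eqP => /(congr1 val) /=.
by rewrite modn_small // => e; rewrite e in h1.
Qed.

Lemma vv_lt e : (vv e < N)%N.
Proof. by have /andP[_ h] := vv_bound e; rewrite /= ltnS (leq_trans (ltnW h)) // leq_pmull. Qed.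

Lemma vv_sum_lt a b : (0 < vv a + vv b < N)%N.
Proof.
have /andP[a1 a2] := vv_bound a; have /andP[b1 b2] := vv_bound b.
rewrite addn_gt0 a1 /= ltnS mul2n -addnn.
by apply: leq_add; apply: ltnW.
Qed.

Lemma cc_sum_nz a b : cc a + cc b != 0.
Proof.
rewrite /cc; case ea: (sg a); case eb: (sg b).
- exact: inZp_sum_nz (vv_sum_lt a b).
- rewrite subr_eq0; apply/eqP => /inZp_inj e.
  by move: eb; rewrite -(vv_inj (e (vv_lt a) (vv_lt b))) ea.
- rewrite addrC subr_eq0; apply/eqP => /inZp_inj e.
  by move: ea; rewrite -(vv_inj (e (vv_lt b) (vv_lt a))) eb.
- by rewrite -opprD oppr_eq0 inZp_sum_nz // vv_sum_lt.
Qed.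

Lemma cc_inj : injective cc.
Proof.
move=> a b; rewrite /cc; case ea: (sg a); case eb: (sg b).
- by move/inZp_inj => e; apply: vv_inj; apply: e; apply: vv_lt.
- move/eqP; rewrite -subr_eq0 opprK => /eqP /esym h.
  by have := inZp_sum_nz (vv_sum_lt a b); rewrite h eqxx.
- move/eqP; rewrite eq_sym -subr_eq0 opprK => /eqP /esym h.
  by have := inZp_sum_nz (vv_sum_lt b a); rewrite h eqxx.
- by move/oppr_inj/inZp_inj => e; apply: vv_inj; apply: e; apply: vv_lt.
Qed.

Lemma cc0 : cc e0 = inZp 1.
Proof. by rewrite /cc sg0 /vv eqxx. Qed.

Definition pp (h : qE B * bool) : ZN := if h.2 then cc h.1 else 0.

Hypothesis hstep : forall g, connect (SS (Wp pp)) ((e0, true), g) ((e0, true), g + inZp 1).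

Lemma final_conn : forall x y, connect (SS (Wp pp)) x y.
Proof.
apply: (conn_crit (h0 := (e0, true))) => c.
rewrite -(valZpK c); elim: (val c) => [|k IH].
  by have -> : (inZp 0 : ZN) = 0 by apply: val_inj. 
apply: connect_trans IH _.
have -> : (inZp k.+1 : ZN) = inZp k + inZp 1 by rewrite inZp_add addn1.
exact: hstep.
Qed.

Definition finQ := potQ final_conn.

Lemma finQ_noloops : no_loops finQ.
Proof.
move=> e; apply/eqP => /potQ_end [_]; rewrite /pp /= subr0 => h.
have /eqP : - cc e.1 = 0 by apply: (@addrI _ e.2); rewrite addr0.
rewrite oppr_eq0 => /eqP h'.
by have := cc_sum_nz e.1 e.1; rewrite h' addr0 eqxx.
Qed.

Lemma finQ_nomulti : no_multiple_edges finQ.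
Proof.
case=> [a ga] [b gb] ab; apply/negP => /orP[]/andP[/eqP /potQ_end [_ h1] /eqP /potQ_end [_ h2]];
  move: h1 h2; rewrite /pp /= ?subr0.
  move=> h1 h2; subst gb; have /oppr_inj /cc_inj e : - cc a = - cc b by apply: (@addrI _ ga).
  by move: ab; rewrite e eqxx.
move=> h1 h2.
have e : ga + 0 = ga - (cc a + cc b) by rewrite addr0 opprD addrA h1 -h2.
move/addrI/esym/eqP: e; rewrite oppr_eq0.
by rewrite (negPf (cc_sum_nz a b)).
Qed.

End Final.

Lemma exists_he (K : fieldType) (B : QBrauerGraph K) (mu : qV B) : exists h : qE B * bool, hend h = mu.
Proof.
have /card_gt0P [e0 _] := qE_nonempty B.
have /connectP [p pp ->] := qconnected (qend B e0 true) mu.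
elim/last_ind: p pp => [|p w _] /=; first by exists (e0, true).
rewrite rcons_path last_rcons => /andP[_ /existsP[e he]].
by case/orP: he => /andP[_ /eqP e2]; [exists (e, false) | exists (e, true)].
Qed.

Section Mult.
Variables (K : fieldType) (B : QBrauerGraph K).

Definition LL := (\big[lcmn/1%N]_(v : qV B) qmult B v)%N.
Lemma LL_gt0 : (0 < LL)%N.
Proof.
apply: (big_ind (fun x => 0 < x)%N) => //; last by move=> i _; exact: qmult_pos.
by move=> x y hx hy; rewrite lcmn_gt0 hx.
Qed.
Definition nL := LL.-1.
Lemma nLE : nL.+1 = LL. Proof. exact: prednK LL_gt0. Qed.
Lemma m_dvd_L v : (qmult B v %| LL)%N.
Proof. exact: (biglcmn_sup v). Qed.

Local Notation ZL := 'I_nL.+1.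

Definition aa (mu : qV B) : ZL := (Zp1 ^+ (LL %/ qmult B mu))%g.

Lemma aa_order mu : #[(aa mu : ((ZL : finZmodType) : finGroupType))]%g = qmult B mu.
Proof.
have hd : (LL %/ qmult B mu %| nL.+1)%N.
  by rewrite nLE; apply/dvdnP; exists (qmult B mu); rewrite mulnC divnK // m_dvd_L.
rewrite /aa orderXdiv; last by rewrite order_Zp1.
by rewrite order_Zp1 nLE divnA ?m_dvd_L // mulKn // LL_gt0.
Qed.

Definition Wm (h : qE B * bool) : ZL :=
  if [pick h' | hend h' == hend h] == Some h then aa (hend h) else 0.

Lemma om_m mu : om Wm mu = aa mu.
Proof.
have [hm hmu] := exists_he mu.
have [h0 [ep /eqP h0mu]] : exists h0, [pick h' | hend h' == mu] = Some h0 /\ hend h0 == mu.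
  case: pickP => [h0 h|none]; first by exists h0.
  by have := none hm; rewrite /= hmu eqxx.
have W_eq h : hend h = mu -> Wm h = if h == h0 then aa mu else 0.
  move=> hh; rewrite /Wm hh ep.
  have -> : (Some h0 == Some h) = (h0 == h) by [].
  by rewrite eq_sym.
rewrite omE (bigD1 h0) /=; last by rewrite h0mu.
rewrite W_eq // eqxx big1 ?addr0 // => h /andP[/eqP hh ne]; by rewrite W_eq // (negPf ne).
Qed.

Lemma brauer_m : brauer_weighting (Wm : _ -> ((ZL : finZmodType) : finGroupType)).
Proof. by move=> mu; move: (om_m mu); rewrite /om => ->; rewrite aa_order. Qed.

Lemma conn_m : forall x y, connect (SS Wm) x y.
Proof.
have /card_gt0P [e0 _] := qE_nonempty B; set h0 := (e0, true).
apply: (conn_crit (h0 := h0)) => c.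
pose D := [set c : ZL | connect (SS Wm) (h0, 0) (h0, c)].
have gD : group_set D.
  apply/group_setP; split; first by rewrite inE connect0.
  move=> x y; rewrite !inE => hx hy.
  apply: connect_trans hx _; have := connect_tr x hy; rewrite /trT /= addr0.
  by [].
have aD mu : aa mu \in D.
  rewrite inE; have [hm hmu] := exists_he mu.
  by have := @om_in_D _ _ _ Wm mu h0 hm hmu 0; rewrite om_m addr0.
have dv mu : (qmult B mu %| #|D|)%N.
  by rewrite -aa_order; apply: (@order_dvdG _ (Group gD)); exact: aD.
have hL : (LL %| #|D|)%N by apply/dvdn_biglcmP => i _; exact: dv i.
have DT : D = setT.
  rewrite -nLE in hL.
  apply/eqP; rewrite eqEcard subsetT /= cardsT card_ord; apply: dvdn_leq hL.
  by apply/card_gt0P; exists 0; rewrite inE connect0.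
have : c \in D by rewrite DT inE.
by rewrite inE.

Qed.

Definition multQ := coverQ brauer_m conn_m.

Lemma multQ_mult v : qmult multQ v = 1%N.
Proof.
rewrite /multQ /= /qmult'; move: (om_m (baseV v)); rewrite /om => ->.
by rewrite aa_order divnn qmult_pos.
Qed.

Lemma multQ_step : covering_step B multQ.
Proof. exact: coverQ_step. Qed.

End Mult.

Lemma flip_S (K : fieldType) (B : QBrauerGraph K) (V : finZmodType) (W : qE B * bool -> V) e b g :
  connect (SS W) ((e, b), g) ((e, ~~ b), g).
Proof. by apply: connect1; rewrite /SS /flipT eqxx orbT. Qed.

Lemma pot_S (K : fieldType) (B : QBrauerGraph K) (V : finZmodType) (p : qE B * bool -> V) e b g e' b' g' :
  qend B e b = qend B e' b' -> g - p (e, b) = g' - p (e', b') ->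
  connect (SS (Wp p)) ((e, b), g) ((e', b'), g').
Proof. by move=> h1 h2; apply: connectR_S; apply/connectR_pot. Qed.

Section Triv.
Variables (K : fieldType) (B : QBrauerGraph K).
Definition p0 (h : qE B * bool) : 'I_1 := 0.

Lemma triv_conn : forall x y, connect (SS (Wp p0)) x y.
Proof.
have /card_gt0P [e0 _] := qE_nonempty B.
by apply: (conn_crit (h0 := (e0, true))) => c; rewrite [c]ord1 connect0.
Qed.

Definition trivQ := potQ triv_conn.

Lemma trivQ_end e1 b1 e2 b2 : qend trivQ e1 b1 = qend trivQ e2 b2 <->
  qend B e1.1 b1 = qend B e2.1 b2.
Proof.
split; first by move/potQ_end; case.
by move=> h; apply/potQ_end; split => //; rewrite [LHS]ord1 [RHS]ord1.
Qed.

Lemma trivQ_mult v : qmult trivQ v = qmult B (baseV v).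
Proof. exact: potQ_mult. Qed.

Lemma trivQ_noloops : no_loops B -> no_loops trivQ.
Proof. by move=> h e; apply/eqP => /trivQ_end /eqP; rewrite (negPf (h _)). Qed.

Lemma trivQ_nomulti : no_multiple_edges B -> no_multiple_edges trivQ.
Proof.
move=> h [a ga] [b gb] ab.
have ab' : a != b by apply: contraNneq ab => ->; rewrite [ga]ord1 [gb]ord1.
have := h a b ab'; apply: contra.
by case/orP => /andP[/eqP /trivQ_end /= -> /eqP /trivQ_end /= ->]; rewrite !eqxx ?orbT.
Qed.

Lemma trivQ_step : covering_step B trivQ.
Proof. exact: potQ_step. Qed.
End Triv.

Lemma vv_e1 (K : fieldType) (B : QBrauerGraph K) (e0 e1 : qE B) : e0 != e1 -> vv e0 e1 e1 = 2%N.
Proof. by move=> ne; rewrite /vv eq_sym (negPf ne) eqxx. Qed.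

Lemma final_exists (K : fieldType) (B : QBrauerGraph K) (hm : forall v, qmult B v = 1%N) :
  exists B3 : QBrauerGraph K, covering_step B B3 /\
    [/\ (forall v : qV B3, qmult B3 v = 1%N), no_loops B3 & no_multiple_edges B3].
Proof.
have fin (e0 e1 : qE B) (sg : qE B -> bool) (sg0 : sg e0)
    (hstep : forall g, connect (SS (Wp (pp e0 e1 sg))) ((e0, true), g) ((e0, true), g + inZp 1)) :
    exists B3 : QBrauerGraph K, covering_step B B3 /\
    [/\ (forall v : qV B3, qmult B3 v = 1%N), no_loops B3 & no_multiple_edges B3].
  exists (@finQ K B e0 e1 sg hstep); split; first exact: potQ_step.
  split; [by move=> v; rewrite potQ_mult hm | exact: finQ_noloops | exact: finQ_nomulti].
case: (boolP [exists e, qend B e true == qend B e false]) => [/existsP [e0 /eqP he0] | nl].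
  pose sg := fun _ : qE B => true.
  apply: (fin e0 e0 sg erefl) => g.
  apply: connect_trans (flip_S _ e0 true g) _.
  apply: pot_S => //=; rewrite /pp /= cc0 // subr0.
  by rewrite addrK.
case: (boolP [exists e0, exists e1, (e0 != e1) &&
   (((qend B e0 true == qend B e1 true) && (qend B e0 false == qend B e1 false)) ||
    ((qend B e0 true == qend B e1 false) && (qend B e0 false == qend B e1 true)))]).
  case/existsP => e0 /existsP [e1 /andP[ne /orP[]/andP[/eqP h1 /eqP h2]]].
    pose sg := fun _ : qE B => true.
    apply: (fin e0 e1 sg erefl) => g.
    have c1 : cc e0 e1 sg e1 = inZp 1 + inZp 1 by rewrite /cc vv_e1 // inZp_add.
    apply: connect_trans (_ : connect _ _ ((e1, true), g + inZp 1)) _.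
      apply: pot_S => //=; rewrite /pp /= cc0 // c1.
      by rewrite opprD addrA addrK.
    apply: connect_trans (flip_S _ e1 true _) _.
    apply: connect_trans (_ : connect _ _ ((e0, false), g + inZp 1)) _.
      by apply: pot_S => //=.
    exact: flip_S.
  pose sg := fun e : qE B => e != e1.
  apply: (fin e0 e1 sg ne) => g.
  have c1 : cc e0 e1 sg e1 = - (inZp 1 + inZp 1) by rewrite /cc /sg eqxx vv_e1 // inZp_add.
  apply: connect_trans (_ : connect _ _ ((e1, false), g - inZp 1)) _.
    by apply: pot_S => //=; rewrite /pp /= cc0 // subr0.
  apply: connect_trans (flip_S _ e1 false _) _.
  apply: connect_trans (_ : connect _ _ ((e0, false), g + inZp 1)) _.
    apply: pot_S => //=; rewrite /pp /= c1 subr0 opprK addrA subrK //.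
  exact: flip_S.
move=> nm; exists (trivQ B); split; first exact: trivQ_step.
split.
- by move=> v; rewrite trivQ_mult hm.
- by apply: trivQ_noloops => e; apply/negP => he; case/existsP: nl; exists e.
apply: trivQ_nomulti => a b ab; apply/negP => hab.
by case/existsP: nm; exists a; apply/existsP; exists b; rewrite ab.
Qed.

Theorem theorem6p7 (K : fieldType) (B0 : QBrauerGraph K) :
  exists B1 B2 B3 : QBrauerGraph K,
    [/\ covering_step B0 B1, covering_step B1 B2 & covering_step B2 B3] /\
    [/\ (forall v : qV B3, qmult B3 v = 1%N),
        no_loops B3 & no_multiple_edges B3].
Proof.
pose B1 := multQ B0; pose B2 := trivQ B1.
have hm : forall v, qmult B2 v = 1%N by move=> v; rewrite /B2 trivQ_mult multQ_mult.
have [B3 [s3 props]] := final_exists hm.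
exists B1, B2, B3; split => //; split; [exact: multQ_step | exact: trivQ_step | exact: s3].
Qed.
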